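(* Let $K$ be a positive integer dividing $T$ and let $\epsilon,\delta,\alpha>0$. Consider the sequence $\{\widetilde{\mathbf y}_{m}\}$ produced by Algorithm DPP (described in the context) with these parameters. Fix an interval $[s,e]$, $1\le s<e\le T$, and suppose $\widehat{\mathcal K}_{s,e}:=\{\mathbf x\in\mathcal K:\ g_t(\mathbf x)\le0\ \forall t\in[s,e]\}\neq\emptyset$. Then $$\sum_{t=s}^{e}f_t(\widetilde{\mathbf y}_{m(t)})-\min_{\mathbf x\in\widehat{\mathcal K}_{s,e}}\sum_{t=s}^{e}f_t(\mathbf x)\le 2KR(2G_f+R\alpha)+\frac{G_f^2}{2\alpha}T,$$ and for every $c>0$, $$\sum_{t=s}^{e}g_t^+(\widetilde{\mathbf y}_{m(t)})\le\frac{G_g^2}{2c}T+2cR\Big(\frac{G_fT}{\alpha}+RK\Big)+\frac{2\alpha R^2}{\delta}+\Big(\frac{G_f}{\alpha}+4R\Big)\frac{G_fT}{2\delta K}+4KRG_g.$$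
   Context: Let $\mathcal K\subset\mathbb R^n$ be convex and compact with $\mathbf 0\in\mathcal K\subseteq R\mathcal B$, where $\mathcal B$ is the closed origin-centered unit Euclidean ball and $R>0$. There are $T$ rounds with an arbitrary sequence of functions $f_1,\dots,f_T,g_1,\dots,g_T:\mathbb R^n\to\mathbb R$, each convex on $R\mathcal B$, such that every subgradient of every $f_t$ (resp. $g_t$) at points of $R\mathcal B$ has Euclidean norm at most $G_f$ (resp. $G_g$). Write $g_t^+(\mathbf x)=\max\{g_t(\mathbf x),0\}$. At the end of round $t$ the functions $f_t,g_t$ are revealed to the algorithm. For a block size $K$ (a positive integer dividing $T$) let $m(t)=\lceil t/K\rceil$ and $\mathcal T_m=\{(m-1)K+1,\dots,mK\}$ for $m\in[T/K]$. Linear optimization oracle (LOO) of a convex compact set $S$: given $\mathbf c\in\mathbb R^n$, returns some point of $\arg\min_{\mathbf x\in S}\mathbf c^\top\mathbf x$. Procedure FW$(\mathbf x_1,\mathbf y,\epsilon;S)$ with $\mathbf x_1\in S$: for $i=1,2,\dots$: call the LOO of $S$ to get $\mathbf v_i\in\arg\min_{\mathbf x\in S}(\mathbf x_i-\mathbf y)^\top\mathbf x$; if $(\mathbf x_i-\mathbf y)^\top(\mathbf x_i-\mathbf v_i)\le\epsilon$ or $\|\mathbf x_i-\mathbf y\|^2\le 3\epsilon$, return $\mathbf x_i$; otherwise let $\sigma_i\in\arg\min_{\sigma\in[0,1]}\|\mathbf y-\mathbf x_i-\sigma(\mathbf v_i-\mathbf x_i)\|^2$ and $\mathbf x_{i+1}=\mathbf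 x_i+\sigma_i(\mathbf v_i-\mathbf x_i)$. Procedure $\mathcal O_{AFP}(\mathbf y_1,\mathbf x_0,\epsilon,S)$ with $\mathbf x_0\in S$: if $\|\mathbf x_0-\mathbf y_1\|^2\le3\epsilon$ return $(\mathbf x_0,\mathbf y_1)$. Otherwise for $i=1,2,\dots$: $\mathbf x_i=$FW$(\mathbf x_{i-1},\mathbf y_i,\epsilon;S)$; if $\|\mathbf x_i-\mathbf y_i\|^2>3\epsilon$ set $\mathbf y_{i+1}=\mathbf y_i-\frac23(\mathbf y_i-\mathbf x_i)$, else return $(\mathbf x_i,\mathbf y_i)$. Algorithm DPP (parameters $T,K,\epsilon,\delta,\alpha>0$): set $\mathbf x_1=\widetilde{\mathbf y}_1$ to an arbitrary point of $\mathcal K$. For $m=1,\dots,T/K$: for each $t\in\mathcal T_m$, play $\mathbf x_m$, observe $f_t,g_t$, and pick $\nabla_t\in\partial f_t(\widetilde{\mathbf y}_m)$. Then set $\bar\nabla_m=\frac1K\sum_{t\in\mathcal T_m}\nabla_t$, $G_m^+(\mathbf x)=\delta\sum_{t\in\mathcal T_m}g_t^+(\mathbf x)$, $\mathbf y_{m+1}=\arg\min_{\mathbf x\in R\mathcal B}\{h_m(\mathbf x):=\bar\nabla_m^\top(\mathbf x-\widetilde{\mathbf y}_m)+G_m^+(\mathbf x)+\frac\alpha2\|\mathbf x-\widetilde{\mathbf y}_m\|^2\}$, and $(\mathbf x_{m+1},\widetilde{\mathbf y}_{m+1})=\mathcal O_{AFP}(\mathbf y_{m+1},\mathbf x_m,\epsilon,\mathcal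 K)$. On round $t$ the played point is $\mathbf x_{m(t)}$. *)

(* Defs.v *)
From HB Require Import structures.
From mathcomp Require Import all_boot all_order all_algebra.
From mathcomp Require Import all_classical all_reals topology normedtype.
Import numFieldNormedType.Exports.
Set Implicit Arguments. Unset Strict Implicit. Unset Printing Implicit Defensive.
Import Order.TTheory GRing.Theory Num.Theory.
Local Open Scope ring_scope.
Local Open Scope classical_set_scope.

Section DPP.
Variables (R : realType) (n : nat).
Notation vec := 'rV[R]_n.

Definition dot (u v : vec) : R := \sum_(i < n) u 0 i * v 0 i.
Definition norm2 (u : vec) : R := dot u u.
Definition enorm (u : vec) : R := Num.sqrt (norm2 u).

Definition eball (r : R) : set vec := [set x | enorm x <= r].

Definition convex_set (S : set vec) : Prop :=
  forall x y l, S x -> S y -> 0 <= l <= 1 -> S (l *: x + (1 - l) *: y).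

Definition convex_on (S : set vec) (f : vec -> R) : Prop :=
  forall x y l, S x -> S y -> 0 <= l <= 1 ->
    f (l *: x + (1 - l) *: y) <= l * f x + (1 - l) * f y.

Definition subgrad (f : vec -> R) (x g : vec) : Prop :=
  forall z, f x + dot g (z - x) <= f z.

Definition pos_part (f : vec -> R) (x : vec) : R := Num.max (f x) 0.

(* m(t) = ceil(t/K) for t >= 1 *)
Definition blk (K t : nat) : nat := (t.-1 %/ K).+1.

(* Linear optimization oracle: v is some point of argmin_{x in S} c^T x *)
Definition LOO (S : set vec) (c v : vec) : Prop :=
  S v /\ forall w, S w -> dot c v <= dot c w.

(* FW_run S y eps x1 xr : procedure FW(x1, y, eps; S) can return xr *)
Inductive FW_run (S : set vec) (y : vec) (eps : R) : vec -> vec -> Prop :=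
| FW_stop x v : LOO S (x - y) v ->
    (dot (x - y) (x - v) <= eps \/ norm2 (x - y) <= 3 * eps) ->
    FW_run S y eps x x
| FW_step x v sigma xr : LOO S (x - y) v ->
    ~ (dot (x - y) (x - v) <= eps \/ norm2 (x - y) <= 3 * eps) ->
    0 <= sigma <= 1 ->
    (forall s, 0 <= s <= 1 ->
       norm2 (y - x - sigma *: (v - x)) <= norm2 (y - x - s *: (v - x))) ->
    FW_run S y eps (x + sigma *: (v - x)) xr ->
    FW_run S y eps x xr.

(* main loop of O_AFP: current y_i, previous x_{i-1}, returned pair *)
Inductive AFP_loop (S : set vec) (eps : R) : vec -> vec -> vec * vec -> Prop :=
| AFP_stop y xprev xi : FW_run S y eps xprev xi ->
    norm2 (xi - y) <= 3 * eps -> AFP_loop S eps y xprev (xi, y)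
| AFP_step y xprev xi out : FW_run S y eps xprev xi ->
    3 * eps < norm2 (xi - y) ->
    AFP_loop S eps (y - (2 / 3) *: (y - xi)) xi out ->
    AFP_loop S eps y xprev out.

(* O_AFP(y1, x0, eps, S) can return the pair out *)
Definition AFP_out (S : set vec) (eps : R) (y1 x0 : vec) (out : vec * vec) : Prop :=
  (norm2 (x0 - y1) <= 3 * eps /\ out = (x0, y1)) \/
  (3 * eps < norm2 (x0 - y1) /\ AFP_loop S eps y1 x0 out).

Definition h_blk (K : nat) (delta alpha : R) (g : nat -> vec -> R)
  (nab : nat -> vec) (ytil : vec) (m : nat) (x : vec) : R :=
  dot ((K%:R)^-1 *: \sum_((m.-1 * K).+1 <= t < (m * K).+1) nab t) (x - ytil)
  + delta * \sum_((m.-1 * K).+1 <= t < (m * K).+1) pos_part (g t) x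
  + alpha / 2 * norm2 (x - ytil).

(* (x, ytil, y, nab) is a possible run of Algorithm DPP with parameters
   T, K, eps, delta, alpha on the sequences f, g.  x m = x_m (played point of
   block m), ytil m = ytil_m, y m = y_m, nab t = chosen subgradient at round t. *)
Definition DPP_run (Kset : set vec) (Rr : R) (T K : nat) (eps delta alpha : R)
  (f g : nat -> vec -> R) (x ytil y nab : nat -> vec) : Prop :=
  [/\ x 1%N = ytil 1%N, Kset (x 1%N),
      (forall t, (1 <= t <= T)%N -> subgrad (f t) (ytil (blk K t)) (nab t)),
      (forall m, (1 <= m <= T %/ K)%N ->
         eball Rr (y m.+1) /\
         forall z, eball Rr z ->
           h_blk K delta alpha g nab (ytil m) m (y m.+1)
           <= h_blk K delta alpha g nab (ytil m) m z) &
      (forall m, (1 <= m <= T %/ K)%N ->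
         AFP_out Kset eps (y m.+1) (x m) (x m.+1, ytil m.+1))].

End DPP.

(* Main.v *)
Require Import Defs.
From HB Require Import structures.
From mathcomp Require Import all_boot all_order all_algebra.
From mathcomp Require Import all_classical all_reals topology normedtype.
From mathcomp Require Import ring lra zify.
Import numFieldNormedType.Exports.
Set Implicit Arguments. Unset Strict Implicit. Unset Printing Implicit Defensive.
Import Order.TTheory GRing.Theory Num.Theory.
Local Open Scope ring_scope.
Local Open Scope classical_set_scope.

Lemma le_of_eq (R : realType) (x y : R) : x = y -> x <= y.
Proof. by move->. Qed.

Section Vec.
Variables (R : realType) (n : nat).
Notation vec := 'rV[R]_n.
Implicit Types (u v w : vec) (a b : R).

Lemma dotC u v : dot u v = dot v u.
Proof. by apply: eq_bigr => i _; rewrite mulrC. Qed.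

Lemma dotDl u v w : dot (u + v) w = dot u w + dot v w.
Proof. by rewrite /dot -big_split; apply: eq_bigr => i _; rewrite mxE mulrDl. Qed.

Lemma dotZl a u v : dot (a *: u) v = a * dot u v.
Proof. by rewrite /dot mulr_sumr; apply: eq_bigr => i _; rewrite mxE mulrA. Qed.

Lemma dotNl u v : dot (- u) v = - dot u v.
Proof. by rewrite -scaleN1r dotZl mulN1r. Qed.

Lemma dotBl u v w : dot (u - v) w = dot u w - dot v w.
Proof. by rewrite dotDl dotNl. Qed.

Lemma dotDr u v w : dot u (v + w) = dot u v + dot u w.
Proof. by rewrite dotC dotDl !(dotC u). Qed.

Lemma dotZr a u v : dot u (a *: v) = a * dot u v.
Proof. by rewrite dotC dotZl dotC. Qed.

Lemma dotNr u v : dot u (- v) = - dot u v.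
Proof. by rewrite dotC dotNl dotC. Qed.

Lemma dotBr u v w : dot u (v - w) = dot u v - dot u w.
Proof. by rewrite dotDr dotNr. Qed.

Lemma dot0l v : dot 0 v = 0.
Proof. by rewrite /dot big1 // => i _; rewrite mxE mul0r. Qed.

Lemma dot_suml (I : Type) (r : seq I) (P : pred I) (F : I -> vec) v :
  dot (\sum_(i <- r | P i) F i) v = \sum_(i <- r | P i) dot (F i) v.
Proof.
elim/big_rec2: _ => [|i y1 y2 _ <-]; first by rewrite dot0l.
by rewrite dotDl.
Qed.

Lemma norm2_ge0 u : 0 <= norm2 u.
Proof. by apply: sumr_ge0 => i _; rewrite -expr2 sqr_ge0. Qed.

Lemma norm2D u v : norm2 (u + v) = norm2 u + 2 * dot u v + norm2 v.
Proof. rewrite /norm2 !dotDl !dotDr (dotC v u); ring. Qed.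

Lemma norm2B u v : norm2 (u - v) = norm2 u - 2 * dot u v + norm2 v.
Proof. rewrite /norm2 !dotBl !dotBr (dotC v u); ring. Qed.

Lemma norm2N u : norm2 (- u) = norm2 u.
Proof. by rewrite /norm2 dotNl dotNr opprK. Qed.

Lemma norm2Z a u : norm2 (a *: u) = a ^+ 2 * norm2 u.
Proof. by rewrite /norm2 dotZl dotZr mulrA expr2. Qed.

Lemma young u v c : 0 < c -> dot u v <= norm2 u / (2 * c) + c / 2 * norm2 v.
Proof.
move=> c0; have := norm2_ge0 (u - c *: v).
rewrite norm2B norm2Z dotZr => H.
have Hd : dot u v = (2 * c * dot u v) / (2 * c) by field; rewrite gt_eqF //; lra.
rewrite Hd.
have -> : c / 2 * norm2 v = (c ^+ 2 * norm2 v) / (2 * c) by field; rewrite gt_eqF.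
rewrite -mulrDl ler_pM2r; last by rewrite invr_gt0; lra.
lra.
Qed.

Lemma small_le0 (x D : R) : 0 <= D -> (forall c, 0 < c -> x <= c * D) -> x <= 0.
Proof.
move=> D0 H; rewrite leNgt; apply/negP => x0.
have c0 : 0 < x / (2 * (D + 1)) by apply: divr_gt0 => //; lra.
have := H _ c0.
have -> : x / (2 * (D + 1)) * D = x * (D / (2 * (D + 1))) by rewrite mulrAC -mulrA.
have : D / (2 * (D + 1)) < 1.
  by rewrite ltr_pdivrMr; lra.
move=> h1 h2.
have : x * (D / (2 * (D + 1))) < x * 1 by rewrite ltr_pM2l.
lra.
Qed.

Lemma cs u v A B : 0 <= A -> 0 <= B -> norm2 u <= A ^+ 2 -> norm2 v <= B ^+ 2 ->
  dot u v <= A * B.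
Proof.
move=> A0 B0 hu hv.
have key : forall c, 0 < c -> dot u v <= A ^+ 2 / (2 * c) + c / 2 * B ^+ 2.
  move=> c c0; have Y := young u v c0. apply: le_trans Y _. apply: lerD.
    by rewrite ler_pM2r // invr_gt0; lra.
  by rewrite ler_pM2l //; lra.
have [Ae|Anz] := eqVneq A 0.
  subst A; rewrite mul0r; apply: (@small_le0 _ (B ^+ 2 / 2)).
    by apply: divr_ge0 => //; apply: sqr_ge0.
  move=> c c0; apply: le_trans (key c c0) _.
  by rewrite expr2 !mul0r add0r [X in X <= _]mulrAC -mulrA.
have [Be|Bnz] := eqVneq B 0.
  subst B; rewrite mulr0; apply: (@small_le0 _ (A ^+ 2 / 2)).
    by apply: divr_ge0 => //; apply: sqr_ge0.
  move=> c c0.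
  have c0' : 0 < c^-1 by rewrite invr_gt0.
  apply: le_trans (key _ c0') _.
  rewrite (_ : 0 ^+ 2 = 0); last by rewrite expr2 mulr0.
  rewrite mulr0 addr0 invfM invrK.
  by apply: le_of_eq; field.
have Ap : 0 < A by rewrite lt_def Anz.
have Bp : 0 < B by rewrite lt_def Bnz.
have cp : 0 < A / B by apply: divr_gt0.
apply: le_trans (key _ cp) _.
apply: le_of_eq.
field; rewrite gt_eqF //=.
Qed.

Lemma eballP (r : R) u : 0 <= r -> eball r u <-> norm2 u <= r ^+ 2.
Proof.
move=> r0; rewrite /eball /enorm /=.
rewrite -(ler_sqrt (norm2 u) (b := r ^+ 2)); last by apply: sqr_ge0.
by rewrite sqrtr_sqr ger0_norm.
Qed.

Lemma enorm_sq u G : enorm u <= G -> 0 <= G /\ norm2 u <= G ^+ 2.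
Proof.
move=> h; have G0 : 0 <= G by apply: le_trans h; apply: sqrtr_ge0.
by split => //; move: h; rewrite -(eballP _ G0).
Qed.

Lemma norm2_convex u v l : 0 <= l <= 1 ->
  norm2 (l *: u + (1 - l) *: v) <= l * norm2 u + (1 - l) * norm2 v.
Proof.
move=> /andP[l0 l1].
have h2 : 0 <= l * (1 - l) by apply: mulr_ge0; lra.
have h3 := mulr_ge0 h2 (norm2_ge0 (u - v)).
rewrite norm2B in h3.
rewrite norm2D !norm2Z !dotZl !dotZr -subr_ge0.
have -> : l * norm2 u + (1 - l) * norm2 v -
  (l ^+ 2 * norm2 u + 2 * (l * ((1 - l) * dot u v)) + (1 - l) ^+ 2 * norm2 v)
  = l * (1 - l) * (norm2 u - 2 * dot u v + norm2 v) by ring.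
done.
Qed.

Lemma eball_convex (r : R) : 0 <= r -> convex_set (eball (n:=n) r).
Proof.
move=> r0 u v l /(eballP _ r0) hu /(eballP _ r0) hv hl; apply/(eballP _ r0).
have H := norm2_convex u v hl; apply: le_trans H _.
case/andP: hl => l0 l1.
have := ler_wpM2l l0 hu; have : 0 <= 1 - l by lra.
move=> h1; have := ler_wpM2l h1 hv. lra.
Qed.

Lemma eball_diff (r : R) u v : 0 <= r -> eball r u -> eball r v ->
  norm2 (u - v) <= (2 * r) ^+ 2.
Proof.
move=> r0 /(eballP _ r0) hu /(eballP _ r0) hv.
rewrite norm2B.
have : dot u (- v) <= r * r by apply: cs => //; rewrite norm2N.
rewrite dotNr; move=> h.
have -> : (2 * r) ^+ 2 = r ^+ 2 + 2 * (r * r) + r ^+ 2 by rewrite !expr2; ring.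
lra.
Qed.

End Vec.

Section AFP.
Variables (R : realType) (n : nat).
Notation vec := 'rV[R]_n.
Implicit Types (u v w z y xi xr x xprev : vec).

Lemma vec_id1 u v (c : R) : u + c *: (v - u) = c *: v + (1 - c) *: u.
Proof. by apply/rowP => i; rewrite !mxE; ring. Qed.

Lemma FW_prop {S y} {eps : R} {x xr} : convex_set S -> FW_run S y eps x xr -> S x ->
  S xr /\ (norm2 (xr - y) <= 3 * eps \/ forall z, S z -> dot (xr - y) (xr - z) <= eps).
Proof.
move=> cS; elim => {x xr}.
  move=> x v [Sv Hv] Hc Sx; split => //; case: Hc => Hc; last by left.
  right => z Sz; apply: le_trans Hc; rewrite !dotBr lerD2l lerN2; exact: Hv.
move=> x v sigma xr [Sv Hv] _ Hs _ _ IH Sx; apply: IH.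
by rewrite vec_id1; apply: cS.
Qed.

Lemma vec_id2 z y xi : z - (y - (2 / 3 : R) *: (y - xi)) = (z - y) - (2 / 3 : R) *: (xi - y).
Proof. by apply/rowP => i; rewrite !mxE; ring. Qed.

Lemma vec_id3 y xi : y - (2 / 3 : R) *: (y - xi) = (1 / 3 : R) *: y + (1 - 1 / 3) *: xi.
Proof. by apply/rowP => i; rewrite !mxE; field. Qed.

Lemma vec_id4 z y xi : xi - z = (xi - y) - (z - y).
Proof. by apply/rowP => i; rewrite !mxE; ring. Qed.

Lemma AFP_loop_prop {S} {eps r : R} {y xprev out} : convex_set S -> S `<=` eball r ->
  0 <= r -> 0 < eps ->
  AFP_loop S eps y xprev out -> S xprev -> eball r y ->
  [/\ S out.1, eball r out.2 & forall z, S z -> norm2 (z - out.2) <= norm2 (z - y)].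
Proof.
move=> cS Sb r0 e0; elim => {y xprev out}.
  move=> y xprev xi HF _ Sx By; have [Sxi _] := FW_prop cS HF Sx.
  by split => //= z _.
move=> y xprev xi out HF Hgt _ IH Sx By.
have [Sxi [Hle|Hd]] := FW_prop cS HF Sx.
  by move: Hle; rewrite leNgt Hgt.
have By' : eball r (y - (2 / 3) *: (y - xi)).
  rewrite vec_id3; apply: (eball_convex (n:=n) r0) => //; first by apply: Sb.
  apply/andP; split; lra.
have [h1 h2 h3] := IH Sxi By'; split => // z Sz.
apply: le_trans (h3 z Sz) _.
have := Hd z Sz; rewrite vec_id2 (vec_id4 z y xi).
have N0 := norm2_ge0 (xi - y).
move: Hgt N0.
set a := z - y; set d := xi - y => Hgt N0 h.
rewrite norm2B dotZr norm2Z (dotC a d).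
rewrite dotBr in h.
rewrite /norm2 in h Hgt N0 *.
rewrite (_ : (2 / 3 : R) ^+ 2 = 4 / 9); last by rewrite expr2; field.
lra.
Qed.

Lemma AFP_out_prop S (eps r : R) y (x0 : vec) out : convex_set S -> S `<=` eball r ->
  0 <= r -> 0 < eps ->
  AFP_out S eps y x0 out -> S x0 -> eball r y ->
  [/\ S out.1, eball r out.2 & forall z, S z -> norm2 (z - out.2) <= norm2 (z - y)].
Proof.
move=> cS Sb r0 e0 [[_ ->]|[_ H]] Sx By; first by split.
exact: AFP_loop_prop H Sx By.
Qed.

End AFP.

Lemma lim_ge0 (R : realType) (Y C : R) : 0 <= C ->
  (forall l, 0 < l <= 1 -> 0 <= l * Y + l ^+ 2 * C) -> 0 <= Y.
Proof.
move=> C0 H; rewrite leNgt; apply/negP => Y0.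
have CY : 0 < C - Y by lra.
set l := - Y / (C - Y).
have l0 : 0 < l by apply: divr_gt0; lra.
have l1 : l <= 1 by rewrite /l ler_pdivrMr //; lra.
have := H l; rewrite l0 l1 => /(_ isT).
have -> : l * Y + l ^+ 2 * C = l * (Y + l * C) by rewrite expr2; ring.
have -> : Y + l * C = - (Y ^+ 2 / (C - Y)) by rewrite /l; field; rewrite gt_eqF.
rewrite pmulr_rge0 // oppr_ge0 => H2.
have : 0 < Y ^+ 2 / (C - Y).
  apply: divr_gt0 => //; rewrite expr2 -mulrNN; apply: mulr_gt0; lra.
lra.
Qed.

Section Strong.
Variables (R : realType) (n : nat).
Notation vec := 'rV[R]_n.

Lemma strong_min (r alpha : R) (Gc : vec -> R) (nb yt y z : vec) :
  0 <= r -> 0 < alpha -> convex_on (eball r) Gc ->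
  eball r y -> eball r z ->
  (forall w, eball r w ->
     dot nb (y - yt) + Gc y + alpha / 2 * norm2 (y - yt)
     <= dot nb (w - yt) + Gc w + alpha / 2 * norm2 (w - yt)) ->
  dot nb (y - yt) + Gc y + alpha / 2 * norm2 (y - yt) + alpha / 2 * norm2 (z - y)
  <= dot nb (z - yt) + Gc z + alpha / 2 * norm2 (z - yt).
Proof.
move=> r0 a0 cG By Bz Hmin.
set P := dot nb (z - yt); set Q := dot nb (y - yt).
set Ny := norm2 (y - yt); set X := dot (y - yt) (z - y); set M := norm2 (z - y).
have Ez : z - yt = (y - yt) + (z - y) by apply/rowP => i; rewrite !mxE; ring.
have Nz : norm2 (z - yt) = Ny + 2 * X + M by rewrite Ez norm2D.
rewrite Nz.
suff : 0 <= P - Q + Gc z - Gc y + alpha * X by lra.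
apply: (@lim_ge0 _ _ (alpha / 2 * M)).
  by apply: mulr_ge0; [lra | apply: norm2_ge0].
move=> l /andP[l0 l1].
have hl : 0 <= l <= 1 by apply/andP; split => //; lra.
have Bw := eball_convex r0 Bz By hl.
have Hw := Hmin _ Bw.
have Gcv := cG _ _ _ Bz By hl.
have Ew1 : (l *: z + (1 - l) *: y) - yt = l *: (z - yt) + (1 - l) *: (y - yt).
  by apply/rowP => i; rewrite !mxE; ring.
have Ew2 : (l *: z + (1 - l) *: y) - yt = (y - yt) + l *: (z - y).
  by apply/rowP => i; rewrite !mxE; ring.
move: Hw; rewrite {1}Ew1 Ew2 (dotDr nb (l *: (z - yt))) !dotZr (norm2D (y - yt)) dotZr norm2Z.
rewrite -/P -/Q -/Ny -/X -/M => Hw.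
set Gw := Gc (l *: z + (1 - l) *: y) in Hw Gcv.
have -> : l * (P - Q + Gc z - Gc y + alpha * X) + l ^+ 2 * (alpha / 2 * M) =
   (l * P + (1 - l) * Q + Gw + alpha / 2 * (Ny + 2 * (l * X) + l ^+ 2 * M)
   - (Q + Gc y + alpha / 2 * Ny)) + (l * Gc z + (1 - l) * Gc y - Gw) by field.
apply: addr_ge0; lra.
Qed.

End Strong.

Section PP.
Variables (R : realType) (n : nat).
Notation vec := 'rV[R]_n.
Implicit Types (g : vec -> R).

Lemma pp_ge0 g a : 0 <= pos_part g a.
Proof. by rewrite /pos_part le_max lexx orbT. Qed.

Lemma pp_le0 g a : g a <= 0 -> pos_part g a = 0.
Proof. by move=> h; rewrite /pos_part max_r. Qed.

Lemma pp_lip g a b (B : R) : g a <= g b + B -> 0 <= B ->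
  pos_part g a <= pos_part g b + B.
Proof.
move=> h B0; rewrite /pos_part ge_max; apply/andP; split.
  apply: le_trans h _; rewrite lerD2r le_max lexx //.
by apply: addr_ge0 => //; rewrite le_max lexx orbT.
Qed.

Lemma pp_convex S g : convex_on S g -> convex_on S (pos_part g).
Proof.
move=> cg u v l Su Sv hl; have := cg u v l Su Sv hl.
case/andP: hl => l0 l1.
rewrite /pos_part ge_max => h; apply/andP; split.
  apply: le_trans h _; apply: lerD; apply: ler_wpM2l; rewrite ?le_max ?lexx //; lra.
apply: addr_ge0; apply: mulr_ge0; rewrite ?le_max ?lexx ?orbT //; lra.
Qed.

Lemma sub_lip (f : vec -> R) a b gr G (r : R) : subgrad f a gr ->
  0 <= G -> norm2 gr <= G ^+ 2 -> 0 <= r -> eball r a -> eball r b ->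
  f a - f b <= 2 * r * G.
Proof.
move=> hs G0 hG r0 Ba Bb; have := hs b.
have := cs (u := gr) (v := a - b) G0 (mulr_ge0 (ler0n _ 2) r0) hG (eball_diff r0 Ba Bb).
have -> : b - a = - (a - b) by rewrite opprB.
rewrite dotNr; lra.
Qed.

End PP.

Lemma nat_case1 (K s e T p j0 j1 N : nat) : (0 < K)%N -> s = p.+1 -> (s <= e)%N -> (e <= T)%N ->
  (j0 * K <= p + K.-1)%N -> (p + K.-1 < K + j0 * K)%N -> (j1 * K <= e)%N ->
  (e < K + j1 * K)%N -> (j0 * K <= j1 * K)%N -> (N * K <= j1 * K)%N ->
  (s <= (j0 * K).+1)%N /\ ((j0 * K).+1 <= (j1 * K).+1)%N /\ ((j1 * K).+1 <= e.+1)%N /\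
      ((j0 * K).+1 - s <= K)%N /\ (e.+1 - (j1 * K).+1 <= K)%N /\ (N * K <= T)%N.
Proof. lia. Qed.

Lemma nat_blk (K s e p j0 j1 m t : nat) : s = p.+1 -> (p + K.-1 < K + j0 * K)%N ->
  (j1 * K <= e)%N -> (j0 * K <= m.-1 * K)%N -> (m * K <= j1 * K)%N ->
  (m.-1 * K < t <= m * K)%N -> (s <= t <= e)%N.
Proof. lia. Qed.

Lemma nat_case2 (K s e p j0 j1 : nat) : s = p.+1 -> (j0 * K <= p + K.-1)%N ->
  (e < K + j1 * K)%N -> (K + j1 * K <= j0 * K)%N -> (e.+1 - s <= K)%N.
Proof. lia. Qed.

Section Sums.
Variable R : realType.

Lemma telesc0 (Q D : nat -> R) (A B : R) a N :
  (forall m, (a <= m < a + N)%N -> Q m <= A + B * (D m - D m.+1)) ->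
  \sum_(a <= m < a + N) Q m <= N%:R * A + B * (D a - D (a + N)%N).
Proof.
elim: N => [|N IH] H.
  by rewrite addn0 big_geq // mul0r subrr mulr0 addr0.
rewrite addnS big_nat_recr /=; last by lia.
have h1 := IH (fun m hm => H m (ltac:(lia))).
have h2 := H (a + N)%N (ltac:(lia)).
apply: le_trans (lerD h1 h2) _.
apply: le_of_eq; rewrite -natr1; ring.
Qed.

Lemma telesc (Q D : nat -> R) (A B Dmax : R) a N : 0 <= B ->
  (forall m, 0 <= D m <= Dmax) ->
  (forall m, (a <= m < a + N)%N -> Q m <= A + B * (D m - D m.+1)) ->
  \sum_(a <= m < a + N) Q m <= N%:R * A + B * Dmax.
Proof.
move=> B0 hD H; apply: le_trans (telesc0 H) _.
rewrite lerD2l; apply: ler_wpM2l => //.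
have := hD a; have := hD (a + N)%N; lra.
Qed.

Lemma reindex (F : nat -> R) K j N :
  \sum_((j * K).+1 <= t < ((j + N) * K).+1) F t =
  \sum_(j.+1 <= m < (j + N).+1) \sum_((m.-1 * K).+1 <= t < (m * K).+1) F t.
Proof.
elim: N => [|N IH].
  by rewrite addn0 !big_geq.
rewrite addnS [RHS]big_nat_recr /=; last by lia.
rewrite -IH (big_cat_nat _ (n := ((j + N) * K).+1)) //.
  by rewrite ltnS leq_mul2r; apply/orP; right; lia.
by rewrite ltnS leq_mul2r; apply/orP; right; lia.
Qed.

Lemma part_le (F : nat -> R) a b C : (forall t, (a <= t < b)%N -> F t <= C) ->
  \sum_(a <= t < b) F t <= (b - a)%:R * C.
Proof.
move=> H; apply: le_trans (ler_sum_nat H) _.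
by rewrite sumr_const_nat mulr_natl.
Qed.

Lemma decomp (F D : nat -> R) (Cp A B Dmax : R) (T K s e : nat) :
  (0 < K)%N -> (1 <= s)%N -> (s <= e)%N -> (e <= T)%N ->
  0 <= Cp -> 0 <= A -> 0 <= B -> (forall m, 0 <= D m <= Dmax) ->
  (forall t, (s <= t <= e)%N -> F t <= Cp) ->
  (forall m, (1 <= m <= T %/ K)%N ->
     (forall t, (m.-1 * K < t <= m * K)%N -> (s <= t <= e)%N) ->
     \sum_((m.-1 * K).+1 <= t < (m * K).+1) F t <= A + B * (D m - D m.+1)) ->
  \sum_(s <= t < e.+1) F t <= (2 * K)%:R * Cp + T%:R / K%:R * A + B * Dmax.
Proof.
move=> K0 s1 se eT Cp0 A0 B0 hD hF hB.
have Dm0 : 0 <= Dmax by have := hD 0%N; lra.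
have Kp : 0 < (K%:R : R) by rewrite ltr0n.
have base : 0 <= T%:R / K%:R * A + B * Dmax.
  by apply: addr_ge0; apply: mulr_ge0 => //; apply: divr_ge0 => //; apply: ltW.
have KC : (K%:R * Cp <= (2 * K)%:R * Cp).
  by apply: ler_wpM2r => //; rewrite ler_nat; lia.
set p := s.-1.
set j0 := ((p + K.-1) %/ K)%N; set j1 := (e %/ K)%N.
have q1 : (j0 * K <= p + K.-1)%N := leq_trunc_div _ _.
have q2 : (p + K.-1 < j0.+1 * K)%N := ltn_ceil _ K0.
have Q1 : (j1 * K <= e)%N := leq_trunc_div _ _.
have Q2 : (e < j1.+1 * K)%N := ltn_ceil _ K0.
rewrite mulSn in q2 Q2.
have jT : (j1 <= T %/ K)%N by apply: leq_div2r.
have ps : s = p.+1 by rewrite /p; lia.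
clearbody j0 j1 p.
move: (T %/ K)%N jT hB => TK jT hB.
case: (leqP j0 j1) => hj.
  have mj : (j0 * K <= j1 * K)%N by rewrite leq_mul2r hj orbT.
  set N := (j1 - j0)%N.
  have j1e : j1 = (j0 + N)%N by rewrite /N subnKC.
  have NKj : (N * K <= j1 * K)%N by rewrite leq_mul2r leq_subr orbT.
  have [n1 [n2 [n3 [n4 [n5 NK]]]]] := nat_case1 K0 ps se eT q1 q2 Q1 Q2 mj NKj.
  rewrite (big_cat_nat _ (n := (j0 * K).+1)) //; last exact: leq_trans n2 n3.
  rewrite [X in _ + X <= _](big_cat_nat _ (n := (j1 * K).+1)) //=.
  have P1 := @part_le F s (j0 * K).+1 Cp (fun t ht => hF t
    (let: conj h1 h2 := andP ht in
     introT andP (conj h1 (leq_trans (leq_trans (h2 : t <= j0 * K)%N mj) Q1)))).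
  have P3 := @part_le F (j1 * K).+1 e.+1 Cp (fun t ht => hF t
    (let: conj h1 h2 := andP ht in
     introT andP (conj (leq_trans n1 (leq_trans n2 h1)) (h2 : t <= e)%N))).

  have c1 : (((j0 * K).+1 - s)%:R * Cp <= K%:R * Cp).
    by apply: ler_wpM2r => //; rewrite ler_nat.
  have c3 : ((e.+1 - (j1 * K).+1)%:R * Cp <= K%:R * Cp).
    by apply: ler_wpM2r => //; rewrite ler_nat.
  have NA : N%:R * A <= T%:R / K%:R * A.
    by apply: ler_wpM2r => //; rewrite ler_pdivlMr // -natrM ler_nat.
  have Mid : \sum_((j0 * K).+1 <= i < (j1 * K).+1) F i <= N%:R * A + B * Dmax.
    rewrite j1e reindex -addSn.
    apply: telesc => // m /andP[hm1 hm2]; apply: hB.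
      apply/andP; split; first exact: leq_trans hm1.
      by apply: leq_trans jT; rewrite j1e -ltnS -addSn.
    move=> t ht.
    have h1 : (j0 * K <= m.-1 * K)%N.
      by rewrite leq_mul2r; apply/orP; right; rewrite -ltnS prednK // (leq_trans _ hm1).
    have h2 : (m * K <= j1 * K)%N.
      by rewrite leq_mul2r; apply/orP; right; rewrite j1e -ltnS -addSn.
    exact: nat_blk ps q2 Q1 h1 h2 ht.
  have := lerD (lerD P1 Mid) P3.
  move=> H; rewrite addrA; apply: le_trans H _.
  have : (2 * K)%:R * Cp = K%:R * Cp + K%:R * Cp :> R.
    by rewrite -mulrDl -natrD addnn -mul2n.
  lra.
have mj : (j1.+1 * K <= j0 * K)%N by rewrite leq_mul2r; apply/orP; right.
rewrite mulSn in mj.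
have c0 := nat_case2 ps q1 Q2 mj.
have P := @part_le F s e.+1 Cp (fun t ht => hF t
    (let: conj h1 h2 := andP ht in introT andP (conj h1 (h2 : t <= e)%N))).
have c1 : ((e.+1 - s)%:R * Cp <= K%:R * Cp).
  by apply: ler_wpM2r => //; rewrite ler_nat.
lra.
Qed.


End Sums.

Section Arith.
Variable R : realType.
Lemma L1 (gyt gym dy ngr B1 cny : R) : gyt + - dy <= gym -> dy <= ngr + cny -> ngr <= B1 ->
  gyt <= gym + (B1 + cny).
Proof. lra. Qed.
Lemma L2 (u v w dP aNy aNzy aDm aDm1 F G2 : R) :
  u - v + dP + aNy + aNzy <= w - v + aDm -> w - v <= G2 -> v - u <= F + aNy ->
  aDm1 <= aNzy -> dP <= G2 + F + (aDm - aDm1).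
Proof. lra. Qed.
Lemma L3 (u v w dP aNy aNzy aDm aDm1 G2 : R) :
  u - v + dP + aNy + aNzy <= w - v + aDm -> w - u <= G2 -> 0 <= dP ->
  aDm1 <= aNzy -> aNy <= G2 + (aDm - aDm1).
Proof. lra. Qed.
Lemma L4 (P KG cKNy X Z : R) : P <= X -> cKNy <= Z -> P + (KG + cKNy) <= KG + X + Z.
Proof. lra. Qed.
End Arith.

Section Main.
Variables (R : realType) (n : nat) (Kset : set 'rV[R]_n) (Rr Gf Gg : R)
  (T K : nat) (eps delta alpha : R) (f g : nat -> 'rV[R]_n -> R)
  (x ytil y nab : nat -> 'rV[R]_n).
Notation vec := 'rV[R]_n.
Hypotheses (Rr0 : 0 < Rr) (cK : convex_set Kset) (sK : Kset `<=` eball Rr)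
  (hconv : forall t, (1 <= t <= T)%N ->
     convex_on (eball Rr) (f t) /\ convex_on (eball Rr) (g t))
  (hsub : forall t z, (1 <= t <= T)%N -> eball Rr z ->
     (exists gr, subgrad (f t) z gr) /\ (exists gr, subgrad (g t) z gr))
  (hGf : forall t z gr, (1 <= t <= T)%N -> eball Rr z ->
     subgrad (f t) z gr -> enorm gr <= Gf)
  (hGg : forall t z gr, (1 <= t <= T)%N -> eball Rr z ->
     subgrad (g t) z gr -> enorm gr <= Gg)
  (K0 : (0 < K)%N) (eps0 : 0 < eps) (d0 : 0 < delta) (a0 : 0 < alpha)
  (run : DPP_run Kset Rr T K eps delta alpha f g x ytil y nab).

Let r0 : 0 <= Rr. Proof. exact: ltW. Qed.

Lemma inv m : (1 <= m <= (T %/ K).+1)%N -> Kset (x m) /\ eball Rr (ytil m).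
Proof.
case: run => h1 h2 _ h4 h5.
elim: m => [//|m IH] hm.
have [->|m0] := eqVneq m 0%N; first by rewrite -h1; split => //; apply: sK.
have hm' : (1 <= m <= T %/ K)%N by lia.
have [Sx _] := IH (ltac:(lia)).
have [By _] := h4 m hm'.
by have [] := AFP_out_prop cK sK r0 eps0 (h5 m hm') Sx By.
Qed.

Lemma afp_dec m z : (1 <= m <= T %/ K)%N -> Kset z ->
  norm2 (z - ytil m.+1) <= norm2 (z - y m.+1).
Proof.
move=> hm Sz; case: run => h1 h2 _ h4 h5.
have [Sx _] := inv (ltac:(lia) : (1 <= m <= (T %/ K).+1)%N).
have [By _] := h4 m hm.
by have [_ _ ] := AFP_out_prop cK sK r0 eps0 (h5 m hm) Sx By; apply.
Qed.

Lemma blk_in m t : (1 <= m)%N -> (m.-1 * K < t <= m * K)%N -> blk K t = m.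
Proof.
move=> m1 ht; rewrite /blk.
case: m m1 ht => [//|q] _ /=; rewrite mulSn => ht.
have -> : t.-1 = (q * K + (t.-1 - q * K))%N by lia.
rewrite divnMDl // divn_small //; lia.
Qed.

Lemma blk_T m t : (1 <= m <= T %/ K)%N -> (m.-1 * K < t <= m * K)%N -> (1 <= t <= T)%N.
Proof.
move=> hm ht; have h1 : (m * K <= T %/ K * K)%N by rewrite leq_mul2r; lia.
have h2 := leq_trunc_div T K; lia.
Qed.

Lemma count_blk m : (1 <= m)%N -> ((m * K).+1 - (m.-1 * K).+1)%N = K.
Proof. by case: m => //= q _; rewrite mulSn; lia. Qed.

Lemma avg_le m v b : (1 <= m)%N ->
  (forall t, ((m.-1 * K).+1 <= t < (m * K).+1)%N -> dot (nab t) v <= b) ->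
  dot ((K%:R)^-1 *: \sum_((m.-1 * K).+1 <= t < (m * K).+1) nab t) v <= b.
Proof.
move=> m1 H; rewrite dotZl dot_suml.
have Kp : 0 < (K%:R : R) by rewrite ltr0n.
apply: le_trans (ler_wpM2l _ (ler_sum_nat H)) _; first by rewrite invr_ge0 ltW.
rewrite sumr_const_nat count_blk // -[b *+ K]mulr_natl mulrA mulVf ?mul1r //.
by rewrite gt_eqF.
Qed.

Lemma sum_dot m v : (1 <= m)%N ->
  \sum_((m.-1 * K).+1 <= t < (m * K).+1) dot (nab t) v =
  K%:R * dot ((K%:R)^-1 *: \sum_((m.-1 * K).+1 <= t < (m * K).+1) nab t) v.
Proof.
move=> m1; have Kp : 0 < (K%:R : R) by rewrite ltr0n.
by rewrite dotZl dot_suml mulrA mulfV ?mul1r // gt_eqF.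
Qed.

Lemma norm2_sym (u v : vec) : norm2 (u - v) = norm2 (v - u).
Proof. by rewrite -opprB norm2N. Qed.

Lemma block_bound m z c : (1 <= m <= T %/ K)%N -> Kset z -> 0 < c ->
  (forall t, (m.-1 * K < t <= m * K)%N -> g t z <= 0) ->
  \sum_((m.-1 * K).+1 <= t < (m * K).+1) (f t (ytil (blk K t)) - f t z)
    <= K%:R * (Gf ^+ 2 / (2 * alpha))
       + K%:R * alpha / 2 * (norm2 (z - ytil m) - norm2 (z - ytil m.+1))
  /\
  \sum_((m.-1 * K).+1 <= t < (m * K).+1) pos_part (g t) (ytil (blk K t))
    <= K%:R * (Gg ^+ 2 / (2 * c)) + 2 * c * K%:R * Rr * Gf / alpha
       + (2 * Rr * Gf + Gf ^+ 2 / (2 * alpha)) / delta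
       + (c * K%:R / 2 + alpha / (2 * delta))
         * (norm2 (z - ytil m) - norm2 (z - ytil m.+1)).
Proof.
move=> hm Sz c0 hgz.
have aa : 0 < alpha by exact: a0.
have dd : 0 < delta by exact: d0.
have RR : 0 < Rr by exact: Rr0.
have m1 : (1 <= m)%N by case/andP: hm.
have ht0 : ((m.-1 * K).+1 <= (m.-1 * K).+1 < (m * K).+1)%N.
  by case: (m) m1 => // q _; rewrite /= mulSn; lia.
have eqb : forall t, ((m.-1 * K).+1 <= t < (m * K).+1)%N -> blk K t = m.
  by move=> t ht; apply: blk_in => //; lia.
have tT : forall t, ((m.-1 * K).+1 <= t < (m * K).+1)%N -> (1 <= t <= T)%N.
  by move=> t ht; apply: (blk_T hm); lia.
under eq_big_nat => t ht do rewrite (eqb t ht).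
under [X in _ /\ X <= _]eq_big_nat => t ht do rewrite (eqb t ht).
have [_ Byt] := inv (ltac:(lia) : (1 <= m <= (T %/ K).+1)%N).
case: run => _ _ h3 h4 _.
have [Bym Hmin] := h4 m hm.
have Bz := sK Sz.
have Dd := afp_dec hm Sz.
set nb := (K%:R)^-1 *: \sum_((m.-1 * K).+1 <= t < (m * K).+1) nab t.
set yt := ytil m in Byt Dd *; set ym := y m.+1 in Bym Dd Hmin *.
set Dm := norm2 (z - yt); set Dm1 := norm2 (z - ytil m.+1) in Dd *.
have subf : forall t, ((m.-1 * K).+1 <= t < (m * K).+1)%N -> subgrad (f t) yt (nab t).
  by move=> t ht; have := h3 t (tT t ht); rewrite (eqb t ht).
have nf : forall t, ((m.-1 * K).+1 <= t < (m * K).+1)%N -> 0 <= Gf /\ norm2 (nab t) <= Gf ^+ 2.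
  by move=> t ht; apply: enorm_sq; apply: (hGf (tT t ht) Byt (subf t ht)).
have Gf0 : 0 <= Gf.
  by have [] := nf _ ht0.
have Kp : 0 < (K%:R : R) by rewrite ltr0n.
set Gc := fun w => delta * \sum_((m.-1 * K).+1 <= t < (m * K).+1) pos_part (g t) w.
have cG : convex_on (eball Rr) Gc.
  move=> u v l Bu Bv hl; rewrite /Gc.
  case/andP: hl => l0 l1.
  rewrite mulrCA [(1 - l) * _]mulrCA -mulrDr; apply: ler_wpM2l; first exact: ltW.
  rewrite !mulr_sumr -big_split /=; apply: ler_sum_nat => t ht.
  have [_ cg] := hconv (tT t ht).
  by apply: (pp_convex cg) => //; apply/andP.
have S := @strong_min _ _ Rr alpha Gc nb yt ym z r0 a0 cG Bym Bz Hmin.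
rewrite /Gc /= in S.
have Gz0 : \sum_((m.-1 * K).+1 <= t < (m * K).+1) pos_part (g t) z = 0.
  rewrite (@eq_big_nat _ _ _ _ _ _ (fun=> 0)); first by rewrite big1.
  by move=> t ht; apply: pp_le0; apply: hgz; lia.
rewrite Gz0 mulr0 addr0 in S.
set P := \sum_((m.-1 * K).+1 <= t < (m * K).+1) pos_part (g t) ym in S.
have P0 : 0 <= P by apply: sumr_ge0 => t _; apply: pp_ge0.
set Ny := norm2 (ym - yt) in S.
set Nzy := norm2 (z - ym) in S Dd.
have Yg : dot nb (yt - ym) <= Gf ^+ 2 / (2 * alpha) + alpha / 2 * Ny.
  apply: avg_le => // t ht; apply: le_trans (young _ _ a0) _.
  rewrite norm2_sym -/Ny lerD2r ler_pM2r; first by case: (nf t ht).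
  by rewrite invr_gt0 mulr_gt0.
have Czyt : dot nb (z - yt) <= Gf * (2 * Rr).
  apply: avg_le => // t ht; have [_ hn] := nf t ht.
  by apply: cs => //; [apply: mulr_ge0 => //; lra | apply: eball_diff].
have Czym : dot nb (z - ym) <= Gf * (2 * Rr).
  apply: avg_le => // t ht; have [_ hn] := nf t ht.
  by apply: cs => //; [apply: mulr_ge0 => //; lra | apply: eball_diff].
have Ny0 : 0 <= Ny by apply: norm2_ge0.
move: Yg Czyt Czym S; rewrite !dotBr => Yg Czyt Czym S.
split.
  have H1 : \sum_((m.-1 * K).+1 <= t < (m * K).+1) (f t yt - f t z)
      <= \sum_((m.-1 * K).+1 <= t < (m * K).+1) dot (nab t) (yt - z).
    apply: ler_sum_nat => t ht; have := subf t ht z.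
    rewrite -[z - yt]opprB dotNr; lra.
  apply: le_trans H1 _; rewrite sum_dot // -/nb dotBr.
  have : dot nb yt - dot nb z <= Gf ^+ 2 / (2 * alpha) + alpha / 2 * (Dm - Dm1).
    have ha : 0 <= alpha / 2 by lra.
    have h1 := ler_wpM2l ha Dd.
    have h2 : 0 <= delta * P by apply: mulr_ge0 => //; lra.
    rewrite mulrBr.
    rewrite -/Dm in S; lra.
  move=> h; have := ler_wpM2l (ltW Kp) h.
  move=> H; apply: le_trans H _; apply: le_of_eq; field; rewrite gt_eqF //.
have two : (0:R) < 2 by rewrite ltr0n.
have ha : 0 <= alpha / 2 by apply: divr_ge0; apply: ltW.
have h1 := ler_wpM2l ha Dd.
rewrite -/Dm in S.
have Gg0 : 0 <= Gg.
  have tT0 := tT _ ht0.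
  have [_ [gr hgr]] := hsub tT0 Byt.
  by have [] := enorm_sq (hGg tT0 Byt hgr).
set B := Gg ^+ 2 / (2 * c) + c / 2 * Ny.
have c2 : 0 < 2 * c by apply: mulr_gt0.
have c2' : 0 <= c / 2 by apply: divr_ge0; apply: ltW.
have B0 : 0 <= B.
  apply: addr_ge0; first by apply: divr_ge0; [apply: sqr_ge0 | apply: ltW].
  by apply: mulr_ge0 => //; apply: norm2_ge0.
have H2 : \sum_((m.-1 * K).+1 <= t < (m * K).+1) pos_part (g t) yt
    <= \sum_((m.-1 * K).+1 <= t < (m * K).+1) (pos_part (g t) ym + B).
  apply: ler_sum_nat => t ht.
  have [_ [gr hgr]] := hsub (tT t ht) Byt.
  have [_ hn] := enorm_sq (hGg (tT t ht) Byt hgr).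
  apply: pp_lip => //.
  have := hgr ym; have := young gr (yt - ym) c0.
  rewrite norm2_sym -/Ny -[ym - yt]opprB dotNr => hy hs.
  have : norm2 gr / (2 * c) <= Gg ^+ 2 / (2 * c).
    by rewrite ler_pM2r // invr_gt0.
  move=> hg; rewrite /B; exact: L1 hs hy hg.
apply: le_trans H2 _.
rewrite big_split /= -/P sumr_const_nat count_blk // -[B *+ K]mulr_natl.
have hA : delta * P <= 2 * Rr * Gf + Gf ^+ 2 / (2 * alpha) + alpha / 2 * (Dm - Dm1).
  rewrite mulrBr [2 * Rr * Gf]mulrC; exact: L2 S Czyt Yg h1.
have hB : alpha / 2 * Ny <= 2 * Rr * Gf + alpha / 2 * (Dm - Dm1).
  have h2 : 0 <= delta * P by apply: mulr_ge0 => //; apply: ltW.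
  rewrite mulrBr [2 * Rr * Gf]mulrC; exact: L3 S Czym h2 h1.
have hP : P <= (2 * Rr * Gf + Gf ^+ 2 / (2 * alpha) + alpha / 2 * (Dm - Dm1)) / delta.
  by rewrite ler_pdivlMr // mulrC.
have hN : Ny <= (2 * Rr * Gf + alpha / 2 * (Dm - Dm1)) * (2 / alpha).
  rewrite -ler_pdivrMr; last by apply: divr_gt0.
  have -> : Ny / (2 / alpha) = alpha / 2 * Ny by field; rewrite gt_eqF.
  done.
have hcK : 0 <= c * K%:R / 2 by apply: divr_ge0 => //; apply: mulr_ge0; apply: ltW.
have hN2 := ler_wpM2l hcK hN.
have -> : K%:R * (Gg ^+ 2 / (2 * c)) + 2 * c * K%:R * Rr * Gf / alpha +
   (2 * Rr * Gf + Gf ^+ 2 / (2 * alpha)) / delta +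
   (c * K%:R / 2 + alpha / (2 * delta)) * (Dm - Dm1)
  = K%:R * (Gg ^+ 2 / (2 * c)) +
    (2 * Rr * Gf + Gf ^+ 2 / (2 * alpha) + alpha / 2 * (Dm - Dm1)) / delta +
    c * K%:R / 2 * ((2 * Rr * Gf + alpha / 2 * (Dm - Dm1)) * (2 / alpha)).
  by field; rewrite ?gt_eqF.
have -> : K%:R * B = K%:R * (Gg ^+ 2 / (2 * c)) + c * K%:R / 2 * Ny.
  by rewrite /B; field; rewrite gt_eqF.
exact: L4 hP hN2.
Qed.

Lemma blk_range t : (1 <= t <= T)%N -> (1 <= blk K t <= (T %/ K).+1)%N.
Proof.
case/andP=> _ ht; rewrite /blk ltnS /=; apply: leq_div2r; exact: leq_trans (leq_pred t) ht.
Qed.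

Lemma final_f z s e : Kset z -> (forall t, (s <= t <= e)%N -> g t z <= 0) ->
  (1 <= s)%N -> (s < e)%N -> (e <= T)%N ->
  \sum_(s <= t < e.+1) f t (ytil (blk K t)) - \sum_(s <= t < e.+1) f t z
  <= 2 * K%:R * Rr * (2 * Gf + Rr * alpha) + Gf ^+ 2 / (2 * alpha) * T%:R.
Proof.
move=> Sz hz s1 se eT.
have aa : 0 < alpha by exact: a0.
have RR : 0 < Rr by exact: Rr0.
have two : (0:R) < 2 by rewrite ltr0n.
have Kp : 0 < (K%:R : R) by rewrite ltr0n.
have Bz := sK Sz.
have tin : forall t, (s <= t <= e)%N -> (1 <= t <= T)%N.
  move=> t /andP[h1 h2]; apply/andP; split; [exact: leq_trans s1 h1 | exact: leq_trans h2 eT].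
have Byt : forall t, (1 <= t <= T)%N -> eball Rr (ytil (blk K t)).
  by move=> t ht; have [] := inv (blk_range ht).
case: (run) => _ _ h3 _ _.
have sT : (1 <= s <= T)%N by apply: tin; rewrite leqnn ltnW.
have [Gf0 _] := enorm_sq (hGf sT (Byt s sT) (h3 s sT)).
set D := fun m => if (1 <= m <= (T %/ K).+1)%N then norm2 (z - ytil m) else 0.
rewrite -sumrB.
have := @decomp _ (fun t => f t (ytil (blk K t)) - f t z) D (2 * Rr * Gf)
  (K%:R * (Gf ^+ 2 / (2 * alpha))) (K%:R * alpha / 2) ((2 * Rr) ^+ 2) T K s e
  K0 s1 (ltnW se) eT.
have Cp0 : 0 <= 2 * Rr * Gf by apply: mulr_ge0 => //; apply: mulr_ge0; apply: ltW.
have A0 : 0 <= K%:R * (Gf ^+ 2 / (2 * alpha)).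
  by apply: mulr_ge0; [apply: ltW | apply: divr_ge0; [apply: sqr_ge0 | apply: ltW; apply: mulr_gt0]].
have B0 : 0 <= K%:R * alpha / 2.
  by apply: divr_ge0; [apply: mulr_ge0; apply: ltW | apply: ltW].
have hD : forall m, 0 <= D m <= (2 * Rr) ^+ 2.
  move=> m; rewrite /D; case: ifP => hm.
    have [_ By] := inv hm.
    by rewrite norm2_ge0 /=; apply: eball_diff.
  by rewrite lexx /=; apply: sqr_ge0.
have hF : forall t, (s <= t <= e)%N -> f t (ytil (blk K t)) - f t z <= 2 * Rr * Gf.
  move=> t ht; have tT := tin t ht.
  have [_ nf] := enorm_sq (hGf tT (Byt t tT) (h3 t tT)).
  exact: sub_lip (h3 t tT) Gf0 nf r0 (Byt t tT) Bz.
have hB : forall m, (1 <= m <= T %/ K)%N ->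
     (forall t, (m.-1 * K < t <= m * K)%N -> (s <= t <= e)%N) ->
     \sum_((m.-1 * K).+1 <= t < (m * K).+1) (f t (ytil (blk K t)) - f t z)
     <= K%:R * (Gf ^+ 2 / (2 * alpha)) + K%:R * alpha / 2 * (D m - D m.+1).
  move=> m hm hc.
  have c1 : (0:R) < 1 by rewrite ltr01.
  have [H _] := block_bound hm Sz c1 (fun t ht => hz t (hc t ht)).
  have e1 : (1 <= m <= (T %/ K).+1)%N.
    by case/andP: hm => h1 h2; rewrite h1 /= (leq_trans h2 (leqnSn _)).
  have e2 : (1 <= m.+1 <= (T %/ K).+1)%N.
    by case/andP: hm => h1 h2; apply/andP; split; [| rewrite ltnS].
  by rewrite /D e1 e2.
move=> /(_ Cp0 A0 B0 hD hF hB) H; apply: le_trans H _.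
apply: le_of_eq; field; rewrite ?gt_eqF //.
Qed.

Lemma final_g z s e c : Kset z -> (forall t, (s <= t <= e)%N -> g t z <= 0) ->
  (1 <= s)%N -> (s < e)%N -> (e <= T)%N -> 0 < c ->
  \sum_(s <= t < e.+1) pos_part (g t) (ytil (blk K t))
     <= Gg ^+ 2 / (2 * c) * T%:R + 2 * c * Rr * (Gf * T%:R / alpha + Rr * K%:R)
        + 2 * alpha * Rr ^+ 2 / delta
        + (Gf / alpha + 4 * Rr) * (Gf * T%:R / (2 * delta * K%:R))
        + 4 * K%:R * Rr * Gg.
Proof.
move=> Sz hz s1 se eT c0.
have aa : 0 < alpha by exact: a0.
have dd : 0 < delta by exact: d0.
have RR : 0 < Rr by exact: Rr0.
have two : (0:R) < 2 by rewrite ltr0n.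
have Kp : 0 < (K%:R : R) by rewrite ltr0n.
have Bz := sK Sz.
have tin : forall t, (s <= t <= e)%N -> (1 <= t <= T)%N.
  move=> t /andP[h1 h2]; apply/andP; split; [exact: leq_trans s1 h1 | exact: leq_trans h2 eT].
have Byt : forall t, (1 <= t <= T)%N -> eball Rr (ytil (blk K t)).
  by move=> t ht; have [] := inv (blk_range ht).
case: (run) => _ _ h3 _ _.
have sT : (1 <= s <= T)%N by apply: tin; rewrite leqnn ltnW.
have [Gf0 _] := enorm_sq (hGf sT (Byt s sT) (h3 s sT)).
have Gg0 : 0 <= Gg.
  have [_ [gr hgr]] := hsub sT (Byt s sT).
  by have [] := enorm_sq (hGg sT (Byt s sT) hgr).
set D := fun m => if (1 <= m <= (T %/ K).+1)%N then norm2 (z - ytil m) else 0.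
set Ag := K%:R * (Gg ^+ 2 / (2 * c)) + 2 * c * K%:R * Rr * Gf / alpha
       + (2 * Rr * Gf + Gf ^+ 2 / (2 * alpha)) / delta.
set Bg := c * K%:R / 2 + alpha / (2 * delta).
have := @decomp _ (fun t => pos_part (g t) (ytil (blk K t))) D (2 * Rr * Gg)
  Ag Bg ((2 * Rr) ^+ 2) T K s e K0 s1 (ltnW se) eT.
have Cp0 : 0 <= 2 * Rr * Gg by apply: mulr_ge0 => //; apply: mulr_ge0; apply: ltW.
have A0 : 0 <= Ag.
  rewrite /Ag; apply: addr_ge0; first apply: addr_ge0.
  - by apply: mulr_ge0; [apply: ltW | apply: divr_ge0; [apply: sqr_ge0 | apply: ltW; apply: mulr_gt0]].
  - apply: divr_ge0; last exact: ltW.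
    apply: mulr_ge0 => //; apply: mulr_ge0; last exact: ltW.
    by apply: mulr_ge0; apply: ltW => //; apply: mulr_gt0.
  - apply: divr_ge0; last exact: ltW.
    apply: addr_ge0; first by apply: mulr_ge0 => //; apply: mulr_ge0; apply: ltW.
    by apply: divr_ge0; [apply: sqr_ge0 | apply: ltW; apply: mulr_gt0].
have B0 : 0 <= Bg.
  rewrite /Bg; apply: addr_ge0; apply: divr_ge0.
  - by apply: mulr_ge0; apply: ltW.
  - exact: ltW.
  - exact: ltW.
  - by apply: ltW; apply: mulr_gt0.
have hD : forall m, 0 <= D m <= (2 * Rr) ^+ 2.
  move=> m; rewrite /D; case: ifP => hm.
    have [_ By] := inv hm.
    by rewrite norm2_ge0 /=; apply: eball_diff.
  by rewrite lexx /=; apply: sqr_ge0.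
have hF : forall t, (s <= t <= e)%N -> pos_part (g t) (ytil (blk K t)) <= 2 * Rr * Gg.
  move=> t ht; have tT := tin t ht.
  have [_ [gr hgr]] := hsub tT (Byt t tT).
  have [_ ng] := enorm_sq (hGg tT (Byt t tT) hgr).
  have L := sub_lip hgr Gg0 ng r0 (Byt t tT) Bz.
  have := @pp_lip _ _ (g t) (ytil (blk K t)) z (2 * Rr * Gg).
  rewrite (pp_le0 (hz t ht)) add0r; apply => //.
  by rewrite addrC -lerBlDr.
have hB : forall m, (1 <= m <= T %/ K)%N ->
     (forall t, (m.-1 * K < t <= m * K)%N -> (s <= t <= e)%N) ->
     \sum_((m.-1 * K).+1 <= t < (m * K).+1) pos_part (g t) (ytil (blk K t))
     <= Ag + Bg * (D m - D m.+1).
  move=> m hm hc.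
  have [_ H] := block_bound hm Sz c0 (fun t ht => hz t (hc t ht)).
  have e1 : (1 <= m <= (T %/ K).+1)%N.
    by case/andP: hm => h1 h2; rewrite h1 /= (leq_trans h2 (leqnSn _)).
  have e2 : (1 <= m.+1 <= (T %/ K).+1)%N.
    by case/andP: hm => h1 h2; apply/andP; split; [| rewrite ltnS].
  by rewrite /D e1 e2.
move=> /(_ Cp0 A0 B0 hD hF hB) H; apply: le_trans H _.
apply: le_of_eq; rewrite /Ag /Bg; field; rewrite ?gt_eqF //.
Qed.

End Main.

Unset Implicit Arguments.

Theorem lemma2 (R : realType) (n : nat) (Kset : set 'rV[R]_n) (Rr Gf Gg : R)
  (T K : nat) (eps delta alpha : R) (f g : nat -> 'rV[R]_n -> R)
  (x ytil y nab : nat -> 'rV[R]_n) (s e : nat) :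
  0 < Rr ->
  convex_set Kset -> compact Kset -> Kset 0 -> Kset `<=` eball Rr ->
  (forall t, (1 <= t <= T)%N ->
     convex_on (eball Rr) (f t) /\ convex_on (eball Rr) (g t)) ->
  (forall t z, (1 <= t <= T)%N -> eball Rr z ->
     (exists gr, subgrad (f t) z gr) /\ (exists gr, subgrad (g t) z gr)) ->
  (forall t z gr, (1 <= t <= T)%N -> eball Rr z ->
     subgrad (f t) z gr -> enorm gr <= Gf) ->
  (forall t z gr, (1 <= t <= T)%N -> eball Rr z ->
     subgrad (g t) z gr -> enorm gr <= Gg) ->
  (0 < K)%N -> (K %| T)%N -> 0 < eps -> 0 < delta -> 0 < alpha ->
  DPP_run Kset Rr T K eps delta alpha f g x ytil y nab ->
  (1 <= s)%N -> (s < e)%N -> (e <= T)%N ->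
  (exists z, Kset z /\ forall t, (s <= t <= e)%N -> g t z <= 0) ->
  (forall z, Kset z -> (forall t, (s <= t <= e)%N -> g t z <= 0) ->
     \sum_(s <= t < e.+1) f t (ytil (blk K t)) - \sum_(s <= t < e.+1) f t z
     <= 2 * K%:R * Rr * (2 * Gf + Rr * alpha) + Gf ^+ 2 / (2 * alpha) * T%:R)
  /\
  (forall c, 0 < c ->
     \sum_(s <= t < e.+1) pos_part (g t) (ytil (blk K t))
     <= Gg ^+ 2 / (2 * c) * T%:R + 2 * c * Rr * (Gf * T%:R / alpha + Rr * K%:R)
        + 2 * alpha * Rr ^+ 2 / delta
        + (Gf / alpha + 4 * Rr) * (Gf * T%:R / (2 * delta * K%:R))
        + 4 * K%:R * Rr * Gg).
Proof.
move=> Rr0 cK _ _ sK hconv hsub hGf hGg K0 _ eps0 d0 a0 run s1 se eT [z0 [Sz0 hz0]].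
split.
  move=> z Sz hz.
  exact: (final_f Rr0 cK sK hconv hsub hGf hGg K0 eps0 d0 a0 run Sz hz s1 se eT).
move=> c c0.
exact: (final_g Rr0 cK sK hconv hsub hGf hGg K0 eps0 d0 a0 run Sz0 hz0 s1 se eT c0).
Qed.
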